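(* For every $n\ge1$, $|\mathcal{B}_n(123)|=C(\lceil n/2\rceil)$, where $C(m)=\frac{1}{m+1}\binom{2m}{m}$ is the $m$-th Catalan number.
   Context: A ballot permutation is a $\pi\in\mathfrak{S}_n$ such that every prefix $\pi_1\cdots\pi_i$ has at most as many descents ($\pi_j>\pi_{j+1}$) as ascents ($\pi_j<\pi_{j+1}$); $\mathcal{B}_n$ denotes the set of them. A permutation avoids the pattern $\sigma\in\mathfrak{S}_k$ if it has no subsequence order-isomorphic to $\sigma$; $\mathcal{B}_n(\sigma)$ is the set of $\sigma$-avoiding elements of $\mathcal{B}_n$. *)

(* Defs.v *)
From mathcomp Require Import all_boot all_fingroup.
Set Implicit Arguments. Unset Strict Implicit. Unset Printing Implicit Defensive.

(* Permutations of [n] are modeled as 'S_n = {perm 'I_n}, with positions and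
   values in {0,...,n-1}; pi i is the value at position i (0-based). *)

(* value of pi at position j (nat), n arbitrary default 0 outside range *)
Definition pval (n : nat) (pi : 'S_n) (j : nat) : nat :=
  match insub j with Some i => nat_of_ord (pi i) | None => 0 end.

(* number of descents / ascents among adjacent pairs (j, j+1) with j+1 < m,
   i.e. inside the prefix pi_1 ... pi_m *)
Definition prefix_des (n : nat) (pi : 'S_n) (m : nat) : nat :=
  \sum_(0 <= j < m.-1) (pval pi j.+1 < pval pi j).
Definition prefix_asc (n : nat) (pi : 'S_n) (m : nat) : nat :=
  \sum_(0 <= j < m.-1) (pval pi j < pval pi j.+1).

Definition ballot (n : nat) (pi : 'S_n) : bool :=
  [forall i : 'I_n.+1, prefix_des pi i <= prefix_asc pi i].

Definition contains (n k : nat) (pi : 'S_n) (sigma : 'S_k) : bool :=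
  [exists f : {ffun 'I_k -> 'I_n},
     [forall a : 'I_k, forall b : 'I_k,
        ((a < b) ==> (f a < f b)) &&
        ((sigma a < sigma b) == (pi (f a) < pi (f b)))]].

Definition avoids (n k : nat) (pi : 'S_n) (sigma : 'S_k) : bool :=
  ~~ contains pi sigma.

Definition pat123 : 'S_3 := 1%g.

Definition ballot_avoiding (n k : nat) (sigma : 'S_k) : {set 'S_n} :=
  [set pi : 'S_n | ballot pi && avoids pi sigma].

Definition catalan (m : nat) : nat := 'C(m.*2, m) %/ m.+1.

(* Main.v *)
Require Import Defs.
From mathcomp Require Import all_boot all_fingroup.
From mathcomp Require Import zify.
Import Defs.
Set Implicit Arguments. Unset Strict Implicit. Unset Printing Implicit Defensive.

Fixpoint W (n : nat) : seq (seq bool) :=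
  if n is n'.+1 then [seq true :: s | s <- W n'] ++ [seq false :: s | s <- W n']
  else [:: [::]].

Fixpoint ballotw (s : seq bool) : bool :=
  if s is b :: s' then ballotw s' && (count id s <= count negb s) else true.

Definition H n a := count (fun s => ballotw s && (count id s == a)) (W n).

Lemma mem_cons_map (c b : bool) s l :
  (b :: s \in [seq c :: x | x <- l]) = (b == c) && (s \in l).
Proof.
apply/mapP/andP => [[x xl [-> ->]]|[/eqP -> sl]]; last by exists s.
by split.
Qed.

Lemma mem_W n s : (s \in W n) = (size s == n).
Proof.
elim: n s => [|n IH] [|b s] //=; try by rewrite inE.
- by rewrite mem_cat; apply/negP => /orP [] /mapP [? ? //].
- rewrite mem_cat !mem_cons_map; move: (IH s) => ->.
  by rewrite eqSS; case: b; rewrite ?orbF.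
Qed.

Lemma uniq_W n : uniq (W n).
Proof.
elim: n => //= n IH; rewrite cat_uniq !map_inj_uniq // ?IH /=;
  try by move=> x y [].
rewrite andbT; apply/hasPn => x /mapP [y _ ->]; by apply/mapP => -[].
Qed.

Lemma ballotw_le s : ballotw s -> count id s <= count negb s.
Proof. by case: s => //= b s /andP []. Qed.

Lemma size_W n s : s \in W n -> size s = n.
Proof. by rewrite mem_W => /eqP. Qed.

Lemma count_andl (c : bool) (p : pred (seq bool)) l :
  count (fun s => c && p s) l = if c then count p l else 0.
Proof. by case: c => //; rewrite count_pred0. Qed.

Lemma H_S0 n : H n.+1 0 = H n 0.
Proof.
rewrite /H /= count_cat !count_map.
rewrite (@eq_count _ _ pred0); last by move=> s /=; rewrite andbF.
rewrite count_pred0 add0n; apply: eq_in_count => s sW /=.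
case: (ballotw s) (@ballotw_le s) => //= /(_ isT) h.
case: eqP => [e|]; last by rewrite andbF.
by rewrite andbT; apply: leqW.
Qed.

Lemma H_SS n a :
  H n.+1 a.+1 = H n a.+1 + (if a.+1 <= n - a then H n a else 0).
Proof.
rewrite /H /= count_cat !count_map addnC; congr (_ + _).
- apply: eq_in_count => s sW /=.
  case: (ballotw s) (@ballotw_le s) => //= /(_ isT) h.
  case: eqP => [e|]; last by rewrite andbF.
  by rewrite andbT; apply: leqW.
- rewrite -count_andl; apply: eq_in_count => s sW /=.
  have hs : count id s + count negb s = n by rewrite -(size_W sW) -(count_predC id s).
  rewrite eqSS; case: eqP => [e|]; last by rewrite !andbF.
  rewrite !andbT; case: (ballotw s); rewrite /= ?andbF ?andbT //.
  apply/idP/idP; lia.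
Qed.

Lemma H_n0 n : H n 0 = 1.
Proof. by elim: n => // n IH; rewrite H_S0. Qed.

Lemma H_big n a : n < a.*2 -> H n a = 0.
Proof.
move=> h; rewrite /H; apply/eqP; rewrite -leqn0 leqNgt -has_count.
apply/hasPn => s sW; apply/negP => /andP [/ballotw_le hb /eqP ha].
have hs : count id s + count negb s = n by rewrite -(size_W sW) -(count_predC id s).
move: hb; rewrite ha; lia.
Qed.

Lemma H_closed n a : a.+1.*2 <= n.+1 -> H n a.+1 + 'C(n, a) = 'C(n, a.+1).
Proof.
elim: n a => [|n IH] a h; first by move: h; lia.
rewrite H_SS.
have [h1|h1] := leqP (a.+1) (n - a); last first.
  have e : n = a.*2 by lia.
  rewrite addn0 H_big; last by lia.
  rewrite add0n e -[in RHS](@bin_sub a.*2.+1 a.+1) //; last by lia.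
  congr 'C(_, _); lia.
rewrite binS.
case: a h h1 => [|a] h h1.
  rewrite H_n0.
  have := IH 0 ltac:(lia). rewrite !bin0 !bin1; lia.
have h2 := IH a.+1 ltac:(lia).
have h3 := IH a ltac:(lia).
rewrite binS; lia.
Qed.

Lemma H_catalan m : H m.*2 m = catalan m.
Proof.
case: m => [|m]; first by rewrite H_n0.
have h := H_closed (n := m.+1.*2) (a := m) ltac:(lia).
have e := mul_bin_left (m.+1.*2) m.
move: h e; set c := 'C(_, m.+1); set d := 'C(_, m); set x := H _ _ => h e.
have hd : d = m.+1 * x.
  have e' : m.+1 * c = m.+2 * d by rewrite e; congr (_ * _); lia.
  rewrite -h in e'; nia.
rewrite /catalan -/c -h hd.
have -> : x + m.+1 * x = m.+2 * x by nia.
by rewrite mulKn.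
Qed.

Lemma H_final n : H n (n %/ 2) = catalan (uphalf n).
Proof.
have [k [e|e]] : exists k, n = k.*2 \/ n = k.*2.+1.
  exists n./2; lia.
- rewrite e uphalf_double -H_catalan; congr H; lia.
- rewrite e -H_catalan.
  have -> : uphalf k.*2.+1 = k.+1 by lia.
  have -> : k.*2.+1 %/ 2 = k by lia.
  have -> : k.+1.*2 = k.*2.+1.+1 by lia.
  rewrite H_SS (@H_big (k.*2.+1) k.+1) ?add0n; last by lia.
  by have -> : k.+1 <= k.*2.+1 - k by lia.
Qed.


Definition isD (n i : nat) : bool := (i %% 2 == 0) && (i.+1 < n).
Definition alt_at (f : nat -> nat) i :=
  if i %% 2 == 0 then f i < f i.+1 else f i.+1 < f i.
Definition good n (f : nat -> nat) :=
  (forall i j, i < j -> j < n -> isD n i = isD n j -> f j < f i) /\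
  (forall i, isD n i -> f i < f i.+1).
Definition Dsum (f : nat -> nat) m := \sum_(0 <= j < m) (f j.+1 < f j).
Definition Asum (f : nat -> nat) m := \sum_(0 <= j < m) (f j < f j.+1).

Lemma pvalE n (p : 'S_n) (i : 'I_n) : pval p i = p i.
Proof.
have e : insub (nat_of_ord i) = Some i := valK i.
by rewrite /pval e.
Qed.

Lemma pvalE' n (p : 'S_n) i (h : i < n) : pval p i = p (Ordinal h).
Proof. by rewrite -pvalE. Qed.

Lemma pval_lt n (p : 'S_n) i : i < n -> pval p i < n.
Proof. by move=> h; rewrite (pvalE' p h). Qed.

Lemma pval_inj n (p : 'S_n) i j : i < n -> j < n -> pval p i = pval p j -> i = j.
Proof.
move=> hi hj; rewrite (pvalE' p hi) (pvalE' p hj) => /val_inj /perm_inj.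
by move=> [].
Qed.

Lemma pvalK n (p : 'S_n) i : i < n -> pval (p^-1)%g (pval p i) = i.
Proof.
move=> hi; rewrite (pvalE' p hi) (pvalE (p^-1)%g (p (Ordinal hi))).
by rewrite permK.
Qed.

Lemma pvalKV n (p : 'S_n) x : x < n -> pval p (pval (p^-1)%g x) = x.
Proof.
move=> hx; rewrite (pvalE' (p^-1)%g hx) (pvalE p ((p^-1)%g (Ordinal hx))).
by rewrite permKV.
Qed.

Lemma pval_neq n (p : 'S_n) i j : i < n -> j < n -> i != j -> pval p i != pval p j.
Proof. by move=> hi hj /eqP hne; apply/eqP => /(pval_inj hi hj). Qed.

Lemma sums_even f k : (forall j, j < k.*2 -> alt_at f j) ->
  Dsum f k.*2 = k /\ Asum f k.*2 = k.
Proof.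
elim: k => [|k IH] h; first by rewrite /Dsum /Asum !big_geq.
have [IH1 IH2] : Dsum f k.*2 = k /\ Asum f k.*2 = k.
  by apply: IH => j hj; apply: h; lia.
have h1 := h k.*2 ltac:(lia); have h2 := h k.*2.+1 ltac:(lia).
rewrite /alt_at in h1 h2.
have e1 : k.*2 %% 2 == 0 by lia.
have e2 : (k.*2.+1 %% 2 == 0) = false by lia.
rewrite e1 in h1; rewrite e2 in h2.
have eD : Dsum f k.+1.*2 = Dsum f k.*2 + (f k.*2.+1 < f k.*2) + (f k.*2.+2 < f k.*2.+1).
  by rewrite /Dsum doubleS !big_nat_recr.
have eA : Asum f k.+1.*2 = Asum f k.*2 + (f k.*2 < f k.*2.+1) + (f k.*2.+1 < f k.*2.+2).
  by rewrite /Asum doubleS !big_nat_recr.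
rewrite eD eA IH1 IH2 h1 h2 (leq_gtF (ltnW h1)) (leq_gtF (ltnW h2)).
by rewrite !addn0 !addn1.
Qed.

Lemma sums_odd f k : (forall j, j <= k.*2 -> alt_at f j) ->
  Dsum f k.*2.+1 = k /\ Asum f k.*2.+1 = k.+1.
Proof.
move=> h; have [IH1 IH2] := @sums_even f k (fun j hj => h j (ltnW hj)).
have h1 := h k.*2 (leqnn _); rewrite /alt_at in h1.
have e1 : k.*2 %% 2 == 0 by lia.
rewrite e1 in h1.
rewrite /Dsum /Asum !big_nat_recr //= -/(Dsum f k.*2) -/(Asum f k.*2) IH1 IH2.
by rewrite h1 (leq_gtF (ltnW h1)) addn0 addn1.
Qed.

Lemma contains_pat n (p : 'S_n) a b c : a < b -> b < c -> c < n ->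
  pval p a < pval p b -> pval p b < pval p c -> contains p pat123.
Proof.
move=> hab hbc hc.
have ha : a < n by lia.
have hb : b < n by lia.
rewrite (pvalE' p ha) (pvalE' p hb) (pvalE' p hc) => h1 h2.
set oa := Ordinal ha in h1 h2 *; set ob := Ordinal hb in h1 h2 *.
set oc := Ordinal hc in h1 h2 *.
have h3 := ltn_trans h1 h2.
apply/existsP.
exists [ffun x : 'I_3 => if val x == 0 then oa else if val x == 1 then ob else oc].
apply/forallP => x; apply/forallP => y; rewrite /pat123 !perm1 !ffunE.
have e1 : (oa < ob) = true by [].
have e2 : (ob < oc) = true by [].
have e3 : (oa < oc) = true by rewrite /= ; lia.
have e4 := leq_gtF (ltnW h1); have e5 := leq_gtF (ltnW h2);
have e6 := leq_gtF (ltnW h3).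
case: x => [[|[|[|x]]] hx] //; case: y => [[|[|[|y]]] hy] //=;
  by rewrite ?h1 ?h2 ?h3 ?e4 ?e5 ?e6 ?ltnn ?e1 ?e2 ?e3.
Qed.

Lemma pat_contains n (p : 'S_n) : contains p pat123 ->
  exists a b c, [/\ a < b, b < c, c < n, pval p a < pval p b & pval p b < pval p c].
Proof.
case/existsP => F /forallP HF.
have o0 : 0 < 3 by []. have o1 : 1 < 3 by []. have o2 : 2 < 3 by [].
have := HF (Ordinal o0) => /forallP /(_ (Ordinal o1)) /andP [/implyP /(_ isT) h1 /eqP].
rewrite /pat123 !perm1 /= => e1.
have := HF (Ordinal o1) => /forallP /(_ (Ordinal o2)) /andP [/implyP /(_ isT) h2 /eqP].
rewrite /pat123 !perm1 /= => e2.
exists (F (Ordinal o0)), (F (Ordinal o1)), (F (Ordinal o2)).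
by rewrite !pvalE -e1 -e2.
Qed.

Lemma ballot_sums n (p : 'S_n) : ballot p ->
  forall m, m < n -> Dsum (pval p) m <= Asum (pval p) m.
Proof.
move=> /forallP Hb m hm; have hm' : m.+1 < n.+1 by rewrite ltnS.
by have := Hb (Ordinal hm'); rewrite /prefix_des /prefix_asc /=.
Qed.

Lemma sums_ballot n (p : 'S_n) :
  (forall m, m < n -> Dsum (pval p) m <= Asum (pval p) m) -> ballot p.
Proof.
move=> Hs; apply/forallP => -[[|i] hi]; rewrite /prefix_des /prefix_asc /=.
  by rewrite !big_geq.
by apply: Hs; lia.
Qed.

Lemma B_alt n (p : 'S_n) : ballot p -> avoids p pat123 ->
  forall i, i.+1 < n -> alt_at (pval p) i.
Proof.
move=> hb hav.
suff: forall k i, i < k -> i.+1 < n -> alt_at (pval p) i.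
  by move=> h i hi; apply: (h i.+1).
elim=> [//|k IH] i; rewrite ltnS leq_eqVlt => /orP [/eqP ->|]; last exact: IH.
move=> hk; have hne := @pval_neq n p k.+1 k hk (ltnW hk) ltac:(lia).
rewrite /alt_at; case: ifP => hpar.
- have ek : k = (k %/ 2).*2 by lia.
  have [D1 A1] := @sums_even (pval p) (k %/ 2) (fun j hj => IH j (ltac:(lia)) ltac:(lia)).
  rewrite -ek in D1 A1.
  have := ballot_sums hb hk.
  rewrite /Dsum /Asum !big_nat_recr //= -/(Dsum _ k) -/(Asum _ k) D1 A1.
  case: (ltnP (pval p k) (pval p k.+1)) => // h1.
  have h2 : pval p k.+1 < pval p k by lia.
  by rewrite h2 addn0 addn1 ltnn.
- have hk0 : 0 < k by lia.
  have hprev := IH k.-1 ltac:(lia) ltac:(lia).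
  rewrite /alt_at (_ : k.-1 %% 2 == 0) ?prednK // in hprev; last by lia.
  case: (ltnP (pval p k.+1) (pval p k)) => // h1.
  have h2 : pval p k < pval p k.+1 by lia.
  exfalso; move/negP: hav; apply.
  by apply: (contains_pat (a := k.-1) (b := k) (c := k.+1)) => //; lia.
Qed.

Lemma B_good n (p : 'S_n) : ballot p -> avoids p pat123 -> good n (pval p).
Proof.
move=> hb hav; have halt := B_alt hb hav.
split; last first.
  move=> i /andP [hpar hi]; have := halt i hi; by rewrite /alt_at hpar.
move=> i j hij hj hD.
have hne := @pval_neq n p j i hj (ltn_trans hij hj) ltac:(lia).
case: (ltnP (pval p i) (pval p j)) => h1; last by lia.
exfalso; move/negP: hav; apply.
case hDj: (isD n j) in hD.
- move: hD hDj => /andP [hpi hi] /andP [hpj hj1].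
  have := halt j hj1; rewrite /alt_at hpj => h2.
  by apply: (contains_pat (a := i) (b := j) (c := j.+1)).
- have hpi : (i %% 2 == 0) = false by move: hD; rewrite /isD; case: (i %% 2 == 0) => //=; lia.
  have := halt i.-1 ltac:(lia); rewrite /alt_at (_ : i.-1 %% 2 == 0); last by lia.
  rewrite prednK; last by lia.
  move=> h2.
  by apply: (contains_pat (a := i.-1) (b := i) (c := j)) => //; lia.
Qed.

Lemma good_alt n f : good n f -> forall i, i.+1 < n -> alt_at f i.
Proof.
move=> [G1 G2] i hi; rewrite /alt_at; case: ifP => hpar.
  by apply: G2; rewrite /isD hpar.
have [h2|h2] := ltnP i.+2 n.
- have hi0 : 0 < i by lia.
  have d1 : isD n i.-1 by rewrite /isD; apply/andP; split; lia.
  have d2 : isD n i.+1 by rewrite /isD; apply/andP; split; lia.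
  have a1 := G1 i.-1 i.+1 ltac:(lia) hi (etrans d1 (esym d2)).
  have a2 := G2 i.-1 d1.
  by rewrite prednK in a2; lia.
- by apply: G1 => //; rewrite /isD hpar; apply/esym/negbTE; lia.
Qed.

Lemma good_B n (p : 'S_n) : good n (pval p) -> ballot p && avoids p pat123.
Proof.
move=> hg; have halt := good_alt hg; have [G1 G2] := hg.
apply/andP; split.
  apply: sums_ballot => m hm.
  have [k [e|e]] : exists k, m = k.*2 \/ m = k.*2.+1 by exists m./2; lia.
  - have [D1 A1] := @sums_even (pval p) k (fun j hj => halt j ltac:(lia)).
    by rewrite e D1 A1.
  - have [D1 A1] := @sums_odd (pval p) k (fun j hj => halt j ltac:(lia)).
    by rewrite e D1 A1.
apply/negP => /pat_contains [a [b [c [hab hbc hc h1 h2]]]].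
case eab: (isD n a == isD n b).
  by have := G1 a b hab ltac:(lia) (eqP eab); lia.
case ebc: (isD n b == isD n c).
  by have := G1 b c hbc hc (eqP ebc); lia.
have eac : isD n a = isD n c by move: eab ebc; case: (isD n a); case: (isD n b); case: (isD n c).
by have := G1 a c ltac:(lia) hc eac; lia.
Qed.

Definition word n (p : 'S_n) : seq bool := [seq isD n (pval (p^-1)%g x) | x <- iota 0 n].

Lemma perm_map_iota n (p : 'S_n) : perm_eq (map (pval p) (iota 0 n)) (iota 0 n).
Proof.
apply: uniq_perm; rewrite ?iota_uniq //.
  rewrite map_inj_in_uniq ?iota_uniq // => i j; rewrite !mem_iota /= => hi hj.
  exact: pval_inj.
move=> y; rewrite mem_iota /=; apply/mapP/idP => [[j]|hy].
  by rewrite mem_iota => /andP [_ hj] ->; apply: pval_lt.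
exists (pval (p^-1)%g y); first by rewrite mem_iota /= pval_lt.
by rewrite pvalKV.
Qed.

Lemma transfer n (p : 'S_n) (P : nat -> nat -> bool) :
  count (fun y => P (pval (p^-1)%g y) y) (iota 0 n) = count (fun j => P j (pval p j)) (iota 0 n).
Proof.
rewrite -(seq.permP (perm_map_iota p)) count_map.
apply: eq_in_count => j; rewrite mem_iota /= => hj.
by rewrite pvalK.
Qed.

Lemma count_even m : count (fun i => i %% 2 == 0) (iota 0 m) = m.+1 %/ 2.
Proof.
elim: m => // m IH.
rewrite (_ : iota 0 m.+1 = iota 0 m ++ [:: m]); last by rewrite -addn1 iotaD.
rewrite count_cat IH /= addn0.
case: eqP => /= h; lia.
Qed.

Lemma count_isD n : count (isD n) (iota 0 n) = n %/ 2.
Proof.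
case: n => // n.
rewrite (_ : iota 0 n.+1 = iota 0 n ++ [:: n]); last by rewrite -addn1 iotaD.
rewrite count_cat /= /isD ltnn andbF addn0.
rewrite (@eq_in_count _ _ (fun i => i %% 2 == 0)); first by rewrite count_even; lia.
move=> i; rewrite mem_iota => /andP [_ hi]; rewrite (_ : i.+1 < n.+1) ?andbT //; lia.
Qed.

Lemma count_drop_iota n (h : nat -> bool) (q : pred bool) t :
  count q (drop t (map h (iota 0 n))) = count (fun y => (t <= y) && q (h y)) (iota 0 n).
Proof.
rewrite -map_drop count_map drop_iota add0n.
have [ht|ht] := leqP t n.
  have e : iota 0 n = iota 0 t ++ iota t (n - t) by rewrite -iotaD subnKC.
  rewrite [in RHS]e count_cat.
  rewrite [X in _ = X + _](@eq_in_count _ _ pred0); last first.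
    by move=> y; rewrite mem_iota => /andP [_ hy] /=; rewrite leqNgt hy.
  rewrite count_pred0 add0n; apply: eq_in_count => y.
  by rewrite mem_iota => /andP [hy _]; rewrite /= hy.
rewrite (_ : n - t = 0) /=; last by lia.
rewrite (@eq_in_count _ _ pred0) ?count_pred0 //.
by move=> y; rewrite mem_iota => /andP [_ hy] /=; rewrite leqNgt (ltn_trans hy ht).
Qed.

Lemma ballotwP s : ballotw s <-> forall t, count id (drop t s) <= count negb (drop t s).
Proof.
elim: s => [|b s IH] /=; first by split => // _ [].
split.
  move=> /andP [/IH h1 h2] [|t] //=; by rewrite drop0.
move=> h; apply/andP; split; last by have := h 0; rewrite drop0.
by apply/IH => t; apply: (h t.+1).
Qed.

Lemma size_word n (p : 'S_n) : size (word p) = n.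
Proof. by rewrite size_map size_iota. Qed.

Lemma count_word n (p : 'S_n) : count id (word p) = n %/ 2.
Proof.
rewrite count_map (transfer p (fun j y => isD n j)); exact: count_isD.
Qed.

Lemma ballot_word n (p : 'S_n) : good n (pval p) -> ballotw (word p).
Proof.
move=> [G1 G2]; apply/ballotwP => t; rewrite /word !count_drop_iota.
rewrite (transfer p (fun j y => (t <= y) && id (isD n j))).
rewrite (transfer p (fun j y => (t <= y) && negb (isD n j))).
rewrite -!size_filter.
set L1 := filter _ _; set L2 := filter _ _.
have <- : size (map succn L1) = size L1 by rewrite size_map.
apply: uniq_leq_size.
  by rewrite map_inj_uniq ?filter_uniq ?iota_uniq //; exact: succn_inj.
move=> x /mapP [j]; rewrite mem_filter mem_iota /= => /andP [/andP [htj hD] hj] ->.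
move: (hD); rewrite /isD => /andP [hpar hj1].
rewrite mem_filter mem_iota /= hj1 andbT.
have := G2 j hD => hlt.
apply/andP; split; first by apply: leq_trans htj (ltnW hlt).
apply/negP => /andP [h1 _]; lia.
Qed.

Lemma rank_count n (p : 'S_n) i : good n (pval p) -> i < n ->
  count (fun y => (isD n (pval (p^-1)%g y) == isD n i) && (pval p i < y)) (iota 0 n)
  = count (fun j => isD n j == isD n i) (iota 0 i).
Proof.
move=> [G1 G2] hi.
rewrite (transfer p (fun j y => (isD n j == isD n i) && (pval p i < y))).
rewrite (@eq_in_count _ _ (fun j => (isD n j == isD n i) && (j < i))); last first.
  move=> j; rewrite mem_iota /= => hj.
  case: eqP => //= e.
  case: (ltngtP j i) => h.
  - exact: G1.
  - by apply/negbTE; rewrite -leqNgt ltnW // G1.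
  - by rewrite h ltnn.
have e : iota 0 n = iota 0 i ++ iota i (n - i) by rewrite -iotaD subnKC // ltnW.
rewrite e count_cat.
rewrite [X in _ + X = _](@eq_in_count _ _ pred0) ?count_pred0 ?addn0; last first.
  by move=> j; rewrite mem_iota => /andP [h _] /=; rewrite ltnNge h andbF.
apply: eq_in_count => j; rewrite mem_iota => /andP [_ h] /=; by rewrite h andbT.
Qed.

Lemma count_iota_lt (P : pred nat) i i' : i < i' -> P i ->
  count P (iota 0 i) < count P (iota 0 i').
Proof.
move=> h hP.
have e : iota 0 i' = iota 0 i ++ iota i (i' - i) by rewrite -iotaD subnKC // ltnW.
have e2 : iota i (i' - i) = i :: iota i.+1 (i' - i).-1.
  by case E: (i' - i) => [|k] //=; lia.
by rewrite e e2 count_cat /= hP; lia.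
Qed.

Lemma rank_inj n i i' : isD n i = isD n i' ->
  count (fun j => isD n j == isD n i) (iota 0 i) = count (fun j => isD n j == isD n i') (iota 0 i') ->
  i = i'.
Proof.
move=> e; rewrite -e => hc.
case: (ltngtP i i') => // h.
- by have := @count_iota_lt (fun j => isD n j == isD n i) i i' h ltac:(by rewrite /= e); lia.
- by have := @count_iota_lt (fun j => isD n j == isD n i) i' i h ltac:(by rewrite /= e); lia.
Qed.

Lemma word_inj n (p q : 'S_n) : good n (pval p) -> good n (pval q) ->
  word p = word q -> p = q.
Proof.
move=> gp gq /esym/eq_in_map E.
have Hg : forall x, x < n -> pval (p^-1)%g x = pval (q^-1)%g x.
  move=> x hx.
  have Ex : isD n (pval (q^-1)%g x) = isD n (pval (p^-1)%g x).
    by apply: E; rewrite mem_iota.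
  apply: (@rank_inj n); first by rewrite Ex.
  rewrite -(rank_count gp (pval_lt (p^-1)%g hx)) -(rank_count gq (pval_lt (q^-1)%g hx)).
  rewrite !pvalKV // Ex; apply: eq_in_count => y; rewrite mem_iota /= => hy.
  by rewrite E // mem_iota.
apply: invg_inj; apply/permP => x; apply: val_inj.
have := Hg x (ltn_ord x); rewrite !pvalE; exact.
Qed.

Definition gtr : rel nat := fun a b => b < a.
Lemma gtr_trans : transitive gtr.
Proof. by move=> y x z h1 h2; rewrite /gtr in h1 h2 *; apply: ltn_trans h2 h1. Qed.

Lemma sortA s k : sorted gtr s -> k < size s ->
  count (fun y => nth 0 s k <= y) s = k.+1.
Proof.
elim: s k => [|a s IH] k //= hs hk.
move: hs; rewrite (path_sortedE gtr_trans) => /andP [/allP hall hs].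
have c0 : forall x, x >= a -> count (fun y => x <= y) s = 0.
  move=> x hx; rewrite (@eq_in_count _ _ pred0) ?count_pred0 //.
  move=> y /hall; rewrite /gtr /= => hy; apply/negbTE; rewrite -ltnNge.
  exact: leq_trans hy hx.
case: k hk => [|k] hk /=; first by rewrite leqnn c0.
have hm : nth 0 s k \in s by apply: mem_nth.
have := hall _ hm; rewrite /gtr => hlt.
by rewrite (ltnW hlt) IH.
Qed.

Lemma sortB s k x : sorted gtr s -> k < count (fun y => x <= y) s -> x <= nth 0 s k.
Proof.
elim: s k => [|a s IH] k //= hs.
move: (hs); rewrite (path_sortedE gtr_trans) => /andP [/allP hall hs'].
case: k => [|k] /=.
  case: (leqP x a) => // hxa.
  rewrite (@eq_in_count _ _ pred0) ?count_pred0 //.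
  move=> y /hall; rewrite /gtr /= => hy; apply/negbTE; rewrite -ltnNge.
  exact: ltn_trans hy hxa.
move=> hk; apply: IH => //; case: (x <= a) hk => /=; lia.
Qed.

Lemma sortC s i j : sorted gtr s -> i < j -> j < size s -> nth 0 s j < nth 0 s i.
Proof.
move=> hs hij hj.
have := @sorted_ltn_nth _ gtr gtr_trans 0 s hs i j.
rewrite !inE => /(_ (ltn_trans hij hj) hj hij).
by rewrite /gtr.
Qed.

Lemma sorted_revfilter (P : pred nat) n : sorted gtr (rev (filter P (iota 0 n))).
Proof.
rewrite rev_sorted.
have -> : (fun z => gtr^~ z) = ltn by [].
by apply: sorted_filter; [exact: ltn_trans | exact: iota_ltn_sorted].
Qed.

Definition Dv (s : seq bool) n := rev (filter (nth false s) (iota 0 n)).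
Definition Uv (s : seq bool) n := rev (filter (fun x => ~~ nth false s x) (iota 0 n)).
Definition Fc (s : seq bool) n i :=
  if isD n i then nth 0 (Dv s n) (i %/ 2) else nth 0 (Uv s n) (i %/ 2).

Lemma memDv s n x : (x \in Dv s n) = (x < n) && nth false s x.
Proof. by rewrite mem_rev mem_filter mem_iota /= andbC. Qed.

Lemma memUv s n x : (x \in Uv s n) = (x < n) && ~~ nth false s x.
Proof. by rewrite mem_rev mem_filter mem_iota /= andbC. Qed.

Lemma key_lemma s n k : size s = n -> ballotw s -> k < size (Dv s n) ->
  nth 0 (Dv s n) k < nth 0 (Uv s n) k.
Proof.
move=> hs hb hk.
have es : s = map (nth false s) (iota 0 n) by rewrite -{1}(mkseq_nth false s) hs.
set x := nth 0 (Dv s n) k.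
have cD := sortA (sorted_revfilter _ _) hk; rewrite -/x in cD.
have e1 : count (fun y => x <= y) (Dv s n) = count (fun y => (x <= y) && id (nth false s y)) (iota 0 n).
  by rewrite /Dv count_rev count_filter; apply: eq_count => y /=; rewrite andbC.
have e2 : count (fun y => x <= y) (Uv s n) = count (fun y => (x <= y) && negb (nth false s y)) (iota 0 n).
  by rewrite /Uv count_rev count_filter; apply: eq_count => y /=; rewrite andbC.
have hbal := (ballotwP s).1 hb x.
rewrite [in X in X <= _]es [in X in _ <= X]es !count_drop_iota -e1 -e2 cD in hbal.
have h1 := sortB (sorted_revfilter _ _) hbal.
have hkU : k < size (Uv s n) by apply: leq_trans hbal (count_size _ _).
have mx : x \in Dv s n by apply: mem_nth.
have my : nth 0 (Uv s n) k \in Uv s n by apply: mem_nth.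
rewrite memDv in mx; rewrite memUv in my.
rewrite ltn_neqAle h1 andbT; apply/eqP => exy.
by move: mx my; rewrite exy => /andP [_ ->] /andP [_].
Qed.

Lemma word_surj n s : size s = n -> ballotw s -> count id s = n %/ 2 ->
  exists p : 'S_n, good n (pval p) /\ word p = s.
Proof.
move=> hs hb hc.
have es : s = map (nth false s) (iota 0 n) by rewrite -{1}(mkseq_nth false s) hs.
have sizeD : size (Dv s n) = n %/ 2.
  by rewrite size_rev size_filter -hc [in RHS]es count_map.
have hcU : count (nth false s) (iota 0 n) + count (fun x => ~~ nth false s x) (iota 0 n) = n.
  by transitivity (size (iota 0 n)); [exact: count_predC | exact: size_iota].
have sizeU : size (Uv s n) = n - n %/ 2.
  rewrite size_rev size_filter; move: hcU; rewrite -sizeD size_rev size_filter; lia.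
have inD : forall i, isD n i -> i %/ 2 < size (Dv s n).
  by move=> i /andP [h1 h2]; rewrite sizeD; lia.
have inU : forall i, i < n -> ~~ isD n i -> i %/ 2 < size (Uv s n).
  move=> i hi; rewrite sizeU /isD negb_and => /orP [h|h]; lia.
have memF : forall i, i < n -> if isD n i then Fc s n i \in Dv s n else Fc s n i \in Uv s n.
  move=> i hi; rewrite /Fc; case hd: (isD n i); apply: mem_nth; first exact: inD.
  by apply: inU; rewrite ?hd.
have Flt : forall i, i < n -> Fc s n i < n.
  move=> i hi; have := memF i hi; case: ifP => _; [rewrite memDv|rewrite memUv];
  by case/andP.
have uD : uniq (Dv s n) by rewrite rev_uniq filter_uniq ?iota_uniq.
have uU : uniq (Uv s n) by rewrite rev_uniq filter_uniq ?iota_uniq.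
have Finj : forall i j, i < n -> j < n -> Fc s n i = Fc s n j -> i = j.
  move=> i j hi hj e.
  have mi := memF i hi; have mj := memF j hj.
  case hdi: (isD n i) in mi; case hdj: (isD n j) in mj.
  - move: e; rewrite /Fc hdi hdj => /eqP; rewrite nth_uniq ?inD // => /eqP e.
    move: hdi hdj; rewrite /isD => /andP [h1 _] /andP [h2 _]; lia.
  - by move: mi mj; rewrite e memDv memUv; case: (nth false s (Fc s n j)); rewrite ?andbF.
  - by move: mi mj; rewrite e memDv memUv; case: (nth false s (Fc s n j)); rewrite ?andbF.
  - move: e; rewrite /Fc hdi hdj => /eqP; rewrite nth_uniq ?inU ?hdi ?hdj // => /eqP e.
    move: hdi hdj; rewrite /isD => /negbT hdi /negbT hdj.
    move: hdi hdj; rewrite !negb_and => /orP [h1|h1] /orP [h2|h2]; lia.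
pose f := fun i : 'I_n => Ordinal (Flt i (ltn_ord i)).
have finj : injective f.
  move=> i j /(congr1 val) /= /(Finj _ _ (ltn_ord i) (ltn_ord j)) e.
  exact: val_inj.
exists (perm finj).
have pF : forall i, i < n -> pval (perm finj) i = Fc s n i.
  by move=> i hi; rewrite (pvalE' _ hi) permE.
split.
  split.
  - move=> i j hij hj hD; rewrite !pF //; last by lia.
    rewrite /Fc -hD; case: ifP => hd.
    + apply: sortC; first exact: sorted_revfilter.
        have hdj : isD n j by rewrite -hD.
        move: hd hdj; rewrite /isD => /andP [h1 _] /andP [h2 _]; lia.
      by apply: inD; rewrite -hD.
    + apply: sortC; first exact: sorted_revfilter.
        have hdj : isD n j = false by rewrite -hD.
        move: hd hdj; rewrite /isD => /negbT hdi /negbT hdj.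
        move: hdi hdj; rewrite !negb_and => /orP [h1|h1] /orP [h2|h2]; lia.
      by apply: inU; rewrite // -hD hd.
  - move=> i hd; move: (hd); rewrite /isD => /andP [hp hi].
    rewrite !pF //; last by lia.
    rewrite /Fc hd (_ : isD n i.+1 = false); last by rewrite /isD; apply/negbTE/nandP; left; lia.
    rewrite (_ : i.+1 %/ 2 = i %/ 2); last by lia.
    by apply: key_lemma => //; apply: inD.
rewrite /word [in RHS]es; apply/eq_in_map => x; rewrite mem_iota => /andP [_ hx].
have hi := pval_lt (perm finj)^-1%g hx.
have Fi : Fc s n (pval (perm finj)^-1%g x) = x by rewrite -pF // pvalKV.
have := memF _ hi; rewrite Fi; case: ifP => _; rewrite ?memDv ?memUv => /andP [_] //.
by move/negbTE ->.
Qed.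

Theorem mainTheorem8 (n : nat) : 1 <= n ->
  #|ballot_avoiding n pat123| = catalan (uphalf n).
Proof.
move=> _.
set A := ballot_avoiding n pat123.
have goodA : forall p, p \in A -> good n (pval p).
  by move=> p; rewrite inE => /andP [h1 h2]; apply: B_good.
have goodA' : forall p, good n (pval p) -> p \in A.
  by move=> p h; rewrite inE good_B.
rewrite cardE -(size_map (@word n)) -H_final /H -size_filter.
apply: perm_size; apply: uniq_perm.
- rewrite map_inj_in_uniq ?enum_uniq // => p q; rewrite !mem_enum => hp hq.
  by apply: word_inj; apply: goodA.
- by rewrite filter_uniq // uniq_W.
move=> w; apply/mapP/idP.
  move=> [p]; rewrite mem_enum => hp ->.
  rewrite mem_filter mem_W size_word eqxx andbT count_word eqxx andbT.
  exact: ballot_word (goodA p hp).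
rewrite mem_filter mem_W => /andP [/andP [hb /eqP hc] /eqP hs].
have [p [hg hw]] := word_surj hs hb hc.
by exists p; rewrite ?mem_enum ?hw //; apply: goodA'.
Qed.
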